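(* Let $w\in\mathbb{R}^n$, $w\ge0$. The following statements are equivalent: (a) $w$ is strongly bilevel feasible; (b) $\{w\}$ is a reaction set; (c) $\mathbf{W}(\mathbf{T}(w))=\{w\}$; (d) $(w,g(w))$ is an extreme point of $\operatorname{epi}(g)$; (e) $\dim\mathbf{T}(w)=n$.
   Context: Single-commodity network pricing setting: $G=(\mathcal{V},\mathcal{A})$ directed graph, arc costs $c\ge0$, nonempty tolled arc set $\mathcal{A}_1\subsetneq\mathcal{A}$, $n=|\mathcal{A}_1|$, $N$ node–arc incidence matrix, single origin $o$ and destination $d$ connected by a toll-free path, $b_o=1$, $b_d=-1$, $b_i=0$ otherwise, $\mathcal{X}=\{x\in\mathbb{R}^{\mathcal{A}}: Nx=b,\ x\ge0\}$, $x_{\mathcal{A}_1}$ the restriction of $x$ to $\mathcal{A}_1$; tolls $t\in\mathbb{R}^n$ are extended by zeros to $\bar t\in\mathbb{R}^{\mathcal{A}}$. Let $f(t)=\min\{c^\top x+t^\top x_{\mathcal{A}_1}: x\in\mathcal{X}\}$ for $t\ge0$, $f(t)=-\infty$ otherwise, and $g(w)=\sup_{t\in\mathbb{R}^n}\{f(t)-t^\top w\}$. A reaction set is a set $W=\{w:(w,z)\in F\text{ for some }z\}$ where $F$ is a face of $\operatorname{epi}(g)$ whose affine hull's direction space does not contain $(0,1)$. A vector $w\ge0$ is strongly bilevel feasible when $\{w\}$ is a reaction set. For $t\ge0$, $\mathbf{W}(t)$ is the set of $w$ such that $(w,x)$ is optimal for some $x$ in $\min_{w,x}\{c^\top x+t^\top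 w: x_{\mathcal{A}_1}\le w,\ Nx=b,\ w\ge0,\ x\ge0\}$, and for a set $T$, $\mathbf{W}(T)=\bigcap_{t\in T}\mathbf{W}(t)$. For $w\ge0$, $\mathbf{T}(w)$ is the set of $t$ that are parts of optimal solutions $(t,y)$ of $\max_{t,y}\{b^\top y-w^\top t: N^\top y-\bar t\le c,\ t\ge0\}$. *)

(* Defs.v *)
From HB Require Import structures.
From mathcomp Require Import all_boot all_order all_algebra.
From mathcomp Require Import all_classical reals constructive_ereal ereal.

Set Implicit Arguments.
Unset Strict Implicit.
Unset Printing Implicit Defensive.

Import Order.TTheory GRing.Theory Num.Theory.
Local Open Scope ring_scope.
Local Open Scope classical_set_scope.

Section Convex.
Variables (R : realType) (V : lmodType R).

Definition convex_set (C : set V) : Prop :=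
  forall x y, C x -> C y -> forall l : R, 0 <= l <= 1 ->
    C (l *: x + (1 - l) *: y).

Definition is_face (C F : set V) : Prop :=
  [/\ F `<=` C, convex_set F &
      forall x y, C x -> C y -> forall l : R, 0 < l < 1 ->
        F (l *: x + (1 - l) *: y) -> F x /\ F y].

Definition extreme_point (C : set V) (p : V) : Prop :=
  C p /\ forall x y, C x -> C y -> forall l : R, 0 < l < 1 ->
    p = l *: x + (1 - l) *: y -> x = p /\ y = p.

(* v belongs to the direction space of the affine hull of F,            *)
Definition in_aff_dir (F : set V) (v : V) : Prop :=
  exists (k : nat) (p q : 'I_k -> V) (mu : 'I_k -> R),
    (forall i, F (p i) /\ F (q i)) /\ v = \sum_(i < k) mu i *: (p i - q i).

Definition aff_indep (k : nat) (p : 'I_k -> V) : Prop :=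
  forall lam : 'I_k -> R,
    \sum_(i < k) lam i = 0 -> \sum_(i < k) lam i *: p i = 0 ->
    forall i, lam i = 0.

Definition aff_dim_eq (S : set V) (k : nat) : Prop :=
  (exists p : 'I_k.+1 -> V, (forall i, S (p i)) /\ aff_indep p) /\
  ~ (exists p : 'I_k.+2 -> V, (forall i, S (p i)) /\ aff_indep p).

End Convex.

Record network (R : realType) := Network {
  node : finType;
  arc : finType;
  tail : arc -> node;
  head : arc -> node;
  cost : arc -> R;
  tolled : {set arc};
  orig : node;
  dest : node
}.
Arguments node {R} n : rename.
Arguments arc {R} n : rename.
Arguments tail {R} n _ : rename.
Arguments head {R} n _ : rename.
Arguments cost {R} n _ : rename.
Arguments tolled {R} n : rename.
Arguments orig {R} n : rename.
Arguments dest {R} n : rename.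

Section Network.
Variables (R : realType) (G : network R).

Definition tarc := {a : arc G | a \in tolled G}.
(* R^n with n = |A_1|, coordinates indexed by the tolled arcs *)
Definition tvec := {ffun tarc -> R^o}.
Definition ntolls : nat := #|tolled G|.

Definition tollfree_arc (u v : node G) : bool :=
  [exists a, [&& a \notin tolled G, tail G a == u & head G a == v]].

Definition standing_assumptions : Prop :=
  [/\ forall a, 0 <= cost G a,
      tolled G != finset.set0,
      tolled G != finset.setT,
      orig G != dest G &
      connect tollfree_arc (orig G) (dest G)].

(* (N x)_v, N the node-arc incidence matrix (+1 at tail, -1 at head) *)
Definition incid (x : arc G -> R) (v : node G) : R :=
  \sum_(a | tail G a == v) x a - \sum_(a | head G a == v) x a.
Definition incidT (y : node G -> R) (a : arc G) : R := y (tail G a) - y (head G a).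

Definition bvec (v : node G) : R :=
  if v == orig G then 1 else if v == dest G then -1 else 0.

Definition Xset : set (arc G -> R) :=
  [set x | (forall v, incid x v = bvec v) /\ (forall a, 0 <= x a)].

Definition restrA1 (x : arc G -> R) : tvec := [ffun a1 => x (val a1)].

Definition extend (t : tvec) (a : arc G) : R :=
  match @insub _ (fun a => a \in tolled G) tarc a with
  | Some a1 => t a1 | None => 0 end.

Definition dotT (t w : tvec) : R := \sum_i t i * w i.
Definition dotA (u x : arc G -> R) : R := \sum_a u a * x a.
Definition dotV (u y : node G -> R) : R := \sum_v u v * y v.

Definition tnonneg (t : tvec) : bool := [forall i, 0 <= t i].

Definition fval (t : tvec) : \bar R :=
  if tnonneg t then
    ereal_inf [set ((dotA (cost G) x + dotT t (restrA1 x))%:E) | x in Xset]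
  else -oo%E.

Definition gval (w : tvec) : \bar R :=
  ereal_sup [set (fval t - (dotT t w)%:E)%E | t in [set: tvec]].

Definition epi_g : set (tvec * R^o)%type :=
  [set p | (gval p.1 <= (p.2 : R)%:E)%E].

Definition reaction_set (W : set tvec) : Prop :=
  exists F : set (tvec * R^o)%type,
    [/\ is_face epi_g F,
        ~ in_aff_dir F ((0 : tvec), (1 : R^o)) &
        W = [set w | exists z, F (w, z)]].

Definition strongly_bilevel_feasible (w : tvec) : Prop :=
  tnonneg w /\ reaction_set [set w].

(* follower's problem  min { c x + t w : x_A1 <= w, Nx = b, w >= 0, x >= 0 } *)
Definition lower_feasible (w : tvec) (x : arc G -> R) : Prop :=
  [/\ forall a1 : tarc, x (val a1) <= w a1,
      forall v, incid x v = bvec v,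
      tnonneg w &
      forall a, 0 <= x a].

Definition lower_obj (t w : tvec) (x : arc G -> R) : R :=
  dotA (cost G) x + dotT t w.

Definition Wset (t : tvec) : set tvec :=
  [set w | exists x, lower_feasible w x /\
     forall w' x', lower_feasible w' x' -> lower_obj t w x <= lower_obj t w' x'].

Definition WsetT (T : set tvec) : set tvec :=
  [set w | forall t, T t -> Wset t w].

(* max { b y - w t : N^T y - tbar <= c, t >= 0 } *)
Definition dual_feasible (t : tvec) (y : node G -> R) : Prop :=
  (forall a, incidT y a - extend t a <= cost G a) /\ tnonneg t.

Definition dual_obj (w t : tvec) (y : node G -> R) : R :=
  dotV bvec y - dotT w t.

Definition Tset (w : tvec) : set tvec :=
  [set t | exists y, dual_feasible t y /\
     forall t' y', dual_feasible t' y' -> dual_obj w t' y' <= dual_obj w t y].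

End Network.

(* Main.v *)
Require Import Defs.
From HB Require Import structures.
From mathcomp Require Import all_boot all_order all_algebra.
From mathcomp Require Import all_classical reals constructive_ereal ereal.
From mathcomp Require Import ring lra.
Import Order.TTheory GRing.Theory Num.Theory.
Local Open Scope ring_scope.
Local Open Scope classical_set_scope.
Set Implicit Arguments.
Unset Strict Implicit.
Unset Printing Implicit Defensive.

Section Farkas.
Variable R : realFieldType.

Lemma sum_delta (I : finType) (k : I) (F : I -> R) :
  \sum_i (i == k)%:R * F i = F k.
Proof.
rewrite (bigD1 k) //= eqxx mul1r big1 ?addr0 // => i /negbTE ->; by rewrite mul0r.
Qed.

Lemma sum_deltar (I : finType) (k : I) (F : I -> R) :
  \sum_i F i * (i == k)%:R = F k.
Proof. by rewrite -(sum_delta k F); apply: eq_bigr => i _; rewrite mulrC. Qed.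

Lemma sum_delta2 (I : finType) (p q : I) (A B : R) (F : I -> R) :
  \sum_i ((i == p)%:R * A + (i == q)%:R * B) * F i = A * F p + B * F q.
Proof.
rewrite -(sum_delta p (fun i => A * F i)) -(sum_delta q (fun i => B * F i)) -big_split.
by apply: eq_bigr => i _ /=; rewrite mulrDl !mulrA ![_ * A]mulrC ![_ * B]mulrC.
Qed.

Lemma big_opt (T : finType) (F : option T -> R) :
  \sum_o F o = F None + \sum_t F (Some t).
Proof.
rewrite (bigD1 None) //=; congr (_ + _).
rewrite (reindex_omap Some id) //=; last by case.
by apply: eq_bigl => t; rewrite eqxx.
Qed.

Variable V : finType.
Definition dotf (a x : V -> R) := \sum_v a v * x v.

Lemma dot_upd a x v0 z :
  dotf a (fun v => if v == v0 then z else x v) = dotf a x - a v0 * x v0 + a v0 * z.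
Proof.
rewrite /dotf (bigD1 v0) //= eqxx [in RHS](bigD1 v0) //=.
have -> : \sum_(i | i != v0) a i * (if i == v0 then z else x i) =
          \sum_(i | i != v0) a i * x i by apply: eq_bigr => i /negbTE ->.
set s := \sum_(i | i != v0) _; set A := a v0 * x v0; rewrite /=.
by rewrite [A + s]addrC addrK addrC.
Qed.

Lemma dot_lin (f g : V -> R) A B x :
  dotf (fun v => A * f v + B * g v) x = A * dotf f x + B * dotf g x.
Proof.
rewrite /dotf !mulr_sumr -big_split; apply: eq_bigr => v _ /=.
by rewrite mulrDl !mulrA.
Qed.

Lemma dot0 x : dotf (fun _ => 0) x = 0.
Proof. by rewrite /dotf big1 // => v _; rewrite mul0r. Qed.

Definition feasible (I : finType) (al : I -> V -> R) (be : I -> R) :=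
  exists x, forall i, dotf (al i) x <= be i.

Lemma farkas_aux n : forall (S : {set V}), (#|S| <= n)%N ->
  forall (I : finType) (al : I -> V -> R) (be : I -> R),
  (forall i v, v \notin S -> al i v = 0) -> ~ feasible al be ->
  exists u : I -> R, (forall i, 0 <= u i) /\ (forall v, \sum_i u i * al i v = 0)
     /\ \sum_i u i * be i < 0.
Proof.
elim: n => [|n IH] S HS I al be Hsupp Hinf.
  have S0 : S = finset.set0 by apply: cards0_eq; apply/eqP; rewrite -leqn0.
  have [/existsP [i Hi]|/existsPn H] := boolP [exists i, be i < 0].
    exists (fun j => (j == i)%:R); split; first by move=> j; rewrite ler0n.
    split; last by rewrite sum_delta.
    by move=> v; rewrite sum_delta Hsupp // S0 inE.
  exfalso; apply: Hinf; exists (fun _ => 0) => i.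
  rewrite /dotf big1; first by have := H i; rewrite -leNgt.
  by move=> v _; rewrite mulr0.
case: (set_0Vmem S) => [S0|[v0 Hv0]].
  by apply: (IH S) => //; rewrite S0 cards0.
set S' := S :\ v0.
have HS' : (#|S'| <= n)%N by move: HS; rewrite (cardsD1 v0 S) Hv0.
pose M (j : (I + I * I)%type) (i : I) : R :=
  match j with
  | inl i0 => if al i0 v0 == 0 then (i == i0)%:R else 0
  | inr (p, q) => if (0 < al p v0) && (al q v0 < 0)
                  then (i == p)%:R * (- al q v0) + (i == q)%:R * al p v0 else 0
  end.
have M0 : forall j i, 0 <= M j i.
  case=> [i0|[p q]] i /=; first by case: ifP => // _; rewrite ler0n.
  case: ifP => // /andP [hp hq].
  apply: addr_ge0; apply: mulr_ge0; rewrite ?ler0n //; lra.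
pose al' j v := \sum_i M j i * al i v.
pose be' j := \sum_i M j i * be i.
have [u' [Hu'0 [Hu'a Hu'b]]] : exists u' : (I + I * I)%type -> R,
  (forall i, 0 <= u' i) /\ (forall v, \sum_i u' i * al' i v = 0)
     /\ \sum_i u' i * be' i < 0.
  apply: (IH S') => //.
    move=> j v; rewrite !inE negb_and negbK => /orP [/eqP ->|vS].
      case: j => [i0|[p q]] /=; rewrite /al' /M /=.
        have [h|h] := boolP (al i0 v0 == 0).
          by rewrite sum_delta (eqP h).
        by rewrite big1 // => i _; rewrite mul0r.
      have [h|h] := boolP ((0 < al p v0) && (al q v0 < 0)).
        by rewrite sum_delta2; lra.
      by rewrite big1 // => i _; rewrite mul0r.
    by rewrite /al' big1 // => i _; rewrite Hsupp // mulr0.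
  move=> [x Hx]; apply: Hinf.
  pose rho i := dotf (al i) x - al i v0 * x v0.
  have Hz : forall i, al i v0 == 0 -> rho i <= be i.
    move=> i hi; have := Hx (inl i).
    have -> : al' (inl i) = al i.
      by apply: funext => v; rewrite /al' /M hi sum_delta.
    have -> : be' (inl i) = be i by rewrite /be' /M hi sum_delta.
    by rewrite /rho (eqP hi) mul0r subr0.
  have Hpq : forall p q, 0 < al p v0 -> al q v0 < 0 ->
      (be q - rho q) / al q v0 <= (be p - rho p) / al p v0.
    move=> p q hp hq; have := Hx (inr (p, q)).
    have -> : al' (inr (p, q)) = (fun v => - al q v0 * al p v + al p v0 * al q v).
      by apply: funext => v; rewrite /al' /M hp hq /= sum_delta2.
    have -> : be' (inr (p, q)) = - al q v0 * be p + al p v0 * be q.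
      by rewrite /be' /M hp hq /= sum_delta2.
    rewrite dot_lin => H.
    set X := (be q - rho q) / al q v0; set Y := (be p - rho p) / al p v0.
    have eX : be q - rho q = al q v0 * X by rewrite /X mulrC divfK //; lra.
    have eY : be p - rho p = al p v0 * Y by rewrite /Y mulrC divfK //; lra.
    have H2 : 0 <= (al p v0 * - al q v0) * (Y - X).
      have : 0 <= - al q v0 * (be p - rho p) + al p v0 * (be q - rho q).
        rewrite /rho; lra.
      rewrite eX eY.
      suff -> : - al q v0 * (al p v0 * Y) + al p v0 * (al q v0 * X) =
               (al p v0 * - al q v0) * (Y - X) by [].
      ring.
    rewrite pmulr_rge0 in H2; first by lra.
    apply: mulr_gt0 => //; lra.
  pose Lb i := (be i - rho i) / al i v0.
  pose z0 := - \sum_i `|Lb i|.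
  pose z := \big[Num.max/z0]_(i | al i v0 < 0) Lb i.
  exists (fun v => if v == v0 then z else x v) => i.
  rewrite dot_upd.
  have : rho i + al i v0 * z <= be i.
    have eL : al i v0 != 0 -> al i v0 * Lb i = be i - rho i.
      by move=> hn; rewrite /Lb mulrC divfK.
    case: (ltrgtP (al i v0) 0) => hi.
    - have h1 : Lb i <= z by apply: (le_bigmax_cond _ (P := fun i => al i v0 < 0)).
      have : al i v0 * z <= al i v0 * Lb i by rewrite ler_nM2l.
      rewrite eL; first by lra.
      by rewrite lt_eqF.
    - have h1 : z <= Lb i.
        apply: bigmax_le => [|q hq]; last exact: Hpq.
        rewrite /z0 (bigD1 i) //=.
        have := ler_norm (- Lb i); rewrite normrN; have := normr_ge0 (Lb i).
        have : 0 <= \sum_(i0 | i0 != i) `|Lb i0| by apply: sumr_ge0 => *.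
        rewrite -/(Lb i); lra.
      have : al i v0 * z <= al i v0 * Lb i by rewrite ler_pM2l.
      rewrite eL; first by lra.
      by rewrite gt_eqF.
    - by rewrite hi mul0r addr0; apply: Hz; rewrite hi.
  by rewrite /rho.
exists (fun i => \sum_j u' j * M j i); split.
  by move=> i; apply: sumr_ge0 => j _; apply: mulr_ge0.
split.
  move=> v; rewrite -{}[RHS](Hu'a v).
  under eq_bigr do rewrite mulr_suml.
  rewrite exchange_big /=; apply: eq_bigr => j _.
  by rewrite /al' mulr_sumr; apply: eq_bigr => i _; rewrite mulrA.
apply: le_lt_trans Hu'b; rewrite le_eqVlt; apply/orP; left; apply/eqP.
under eq_bigr do rewrite mulr_suml.
rewrite exchange_big /=; apply: eq_bigr => j _.
by rewrite /be' mulr_sumr; apply: eq_bigr => i _; rewrite mulrA.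
Qed.

End Farkas.

Section Farkas2.
Variable R : realFieldType.

Lemma dotf_scalr (V : finType) (a x : V -> R) k :
  dotf a (fun v => k * x v) = k * dotf a x.
Proof. by rewrite /dotf mulr_sumr; apply: eq_bigr => v _; rewrite mulrCA. Qed.

Lemma dotf_addr (V : finType) (a x y : V -> R) :
  dotf a (fun v => x v + y v) = dotf a x + dotf a y.
Proof. by rewrite /dotf -big_split; apply: eq_bigr => v _; rewrite mulrDr. Qed.

Lemma dotf_oppl (V : finType) (a x : V -> R) :
  dotf (fun v => - a v) x = - dotf a x.
Proof. by rewrite /dotf -sumrN; apply: eq_bigr => v _; rewrite mulNr. Qed.

Lemma farkas_infeas (V I : finType) (al : I -> V -> R) (be : I -> R) :
  ~ feasible al be ->
  exists u : I -> R, (forall i, 0 <= u i) /\ (forall v, \sum_i u i * al i v = 0)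
     /\ \sum_i u i * be i < 0.
Proof.
move=> H; apply: (@farkas_aux R V #|V| [set: V]) => //; first by rewrite cardsT.
by move=> i v; rewrite inE.
Qed.

Lemma farkas_implied (V I : finType) (al : I -> V -> R) (be : I -> R)
    (ga : V -> R) (de : R) :
  feasible al be ->
  (forall x, (forall i, dotf (al i) x <= be i) -> dotf ga x <= de) ->
  exists u : I -> R, (forall i, 0 <= u i) /\ (forall v, \sum_i u i * al i v = ga v)
     /\ \sum_i u i * be i <= de.
Proof.
move=> [x0 Hx0] Himp.
pose al2 (r : option (option I)) (v : option V) : R :=
  match r, v with
  | Some (Some i), Some v => al i v | Some (Some i), None => - be i
  | Some None, Some _ => 0 | Some None, None => -1
  | None, Some v => - ga v | None, None => de end.
pose be2 (r : option (option I)) : R := if r is None then -1 else 0.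
have Hinf : ~ feasible al2 be2.
  move=> [x Hx]; set tau := x None; set y := fun v => x (Some v).
  have e : forall r, dotf (al2 r) x = al2 r None * tau + dotf (fun v => al2 r (Some v)) y.
    by move=> r; rewrite /dotf big_opt.
  have Hi : forall i, dotf (al i) y <= be i * tau.
    move=> i; have := Hx (Some (Some i)); rewrite e /=; lra.
  have Ht : 0 <= tau.
    have := Hx (Some None); rewrite e /= dot0; lra.
  have Hg : 1 + de * tau <= dotf ga y.
    have := Hx None; rewrite e /= dotf_oppl; lra.
  have [htau|htau] := boolP (0 < tau).
    have := Himp (fun v => tau^-1 * y v).
    rewrite dotf_scalr => /(_ _) H.
    have : tau^-1 * dotf ga y <= de.
      apply: H => i; rewrite dotf_scalr.
      by rewrite ler_pdivrMl // mulrC Hi.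
    rewrite ler_pdivrMl //; lra.
  have t0 : tau = 0 by lra.
  pose lam := `|de - dotf ga x0| + 1.
  have := Himp (fun v => x0 v + lam * y v).
  rewrite dotf_addr dotf_scalr => /(_ _) H.
  have : dotf ga x0 + lam * dotf ga y <= de.
    apply: H => i; rewrite dotf_addr dotf_scalr.
    have := Hi i; rewrite t0 mulr0 => hi.
    have := Hx0 i; have : 0 <= lam by rewrite /lam; apply: addr_ge0.
    move=> hl; have : lam * dotf (al i) y <= 0 by apply: mulr_ge0_le0.
    lra.
  have lp : 0 < lam by rewrite /lam; have := normr_ge0 (de - dotf ga x0); lra.
  have hl : lam * 1 <= lam * dotf ga y.
    by rewrite ler_pM2l //; move: Hg; rewrite t0 mulr0 addr0.
  have := ler_norm (de - dotf ga x0); rewrite /lam in hl *; lra.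
have [u [Hu0 [Hua Hub]]] := farkas_infeas Hinf.
have uN : 0 < u None.
  move: Hub; rewrite big_opt big_opt /= big1 => [|i _]; [lra | by rewrite mulr0].
exists (fun i => u (Some (Some i)) / u None); split.
  by move=> i; apply: divr_ge0; [apply: Hu0 | apply: ltW].
split.
  move=> v; have := Hua (Some v); rewrite big_opt big_opt /= mulr0 add0r.
  move=> H.
  have -> : \sum_i u (Some (Some i)) / u None * al i v =
            (\sum_i u (Some (Some i)) * al i v) / u None.
    by rewrite mulr_suml; apply: eq_bigr => i _; rewrite mulrAC.
  have -> : \sum_i u (Some (Some i)) * al i v = u None * ga v.
    by move: H; rewrite mulrN; lra.
  by rewrite mulrC mulKf // gt_eqF.
have := Hua None; rewrite big_opt big_opt /= => H.
have -> : \sum_i u (Some (Some i)) / u None * be i =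
          (\sum_i u (Some (Some i)) * be i) / u None.
  by rewrite mulr_suml; apply: eq_bigr => i _; rewrite mulrAC.
have -> : \sum_i u (Some (Some i)) * be i = u None * de - u (Some None).
  move: H; under eq_bigr do rewrite mulrN; rewrite sumrN; lra.
rewrite ler_pdivrMr // mulrC; have := Hu0 (Some None); lra.
Qed.

End Farkas2.

Section LinAlg.
Variable R : realFieldType.

Lemma ker_nonfree (m n : nat) (A : 'M[R]_(m, n)) :
  ~~ row_free A -> exists r : 'rV_m, r != 0 /\ r *m A = 0.
Proof.
rewrite -kermx_eq0 => hK.
have [i hi] : exists i, row i (kermx A) != 0.
  apply/existsP; apply: contraT; rewrite negb_exists => /forallP H.
  case/negP: hK; apply/eqP/row_matrixP => i; rewrite row0; exact/eqP/negPn/H.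
exists (row i (kermx A)); split => //.
by apply/eqP; rewrite -sub_kermx row_sub.
Qed.

Definition indepf (k : nat) (J : finType) (v : 'I_k -> J -> R) :=
  forall lam : 'I_k -> R, (forall j, \sum_i lam i * v i j = 0) -> forall i, lam i = 0.

Lemma indep_le (k : nat) (J : finType) (v : 'I_k -> J -> R) :
  indepf v -> (k <= #|J|)%N.
Proof.
move=> Hv.
pose M := \matrix_(i < k, j < #|J|) v i (enum_val j).
suff : row_free M by move/eqP => <-; apply: rank_leq_col.
apply: contraT => /ker_nonfree [r [rn0 hr]].
have H := Hv (fun i => r 0 i).
case/eqP: rn0; apply/rowP => i; rewrite mxE; apply: H => j.
have := congr1 (fun B : 'rV_#|J| => B 0 (enum_rank j)) hr; rewrite !mxE => e.
apply: etrans e; by apply: eq_bigr => i' _; rewrite mxE enum_rankK.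
Qed.

Lemma orth_exists (k : nat) (J : finType) (v : 'I_k -> J -> R) :
  (k < #|J|)%N -> exists z : J -> R, (exists j, z j != 0) /\
      forall i, \sum_j v i j * z j = 0.
Proof.
move=> hk.
pose M := \matrix_(i < k, j < #|J|) v i (enum_val j).
have : ~~ row_free M^T.
  rewrite /row_free mxrank_tr; apply/negP => /eqP h.
  by have := rank_leq_row M; rewrite h => /(leq_trans hk); rewrite ltnn.
move=> /ker_nonfree [r [rn0 hr]].
exists (fun j => r 0 (enum_rank j)); split.
  apply/existsP; apply: contraT; rewrite negb_exists => /forallP H.
  case/eqP: rn0; apply/rowP => c; rewrite mxE.
  by have := H (enum_val c); rewrite enum_valK => /negPn/eqP.
move=> i.
have := congr1 (fun B : 'rV_k => B 0 i) hr; rewrite !mxE => e.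
apply: etrans e; rewrite (reindex (@enum_val J xpredT)) /=; last by apply: onW_bij; exact: enum_val_bij.
by apply: eq_bigr => c _; rewrite !mxE enum_valK mulrC.
Qed.

End LinAlg.

Section Net.
Variables (R : realType) (G : network R).
Hypothesis HG : standing_assumptions G.

Local Notation DV := (tarc G + node G)%type.
Local Notation DI := (Defs.arc G + tarc G)%type.

Definition alQ (r : DI) (v : DV) : R :=
  match r, v with
  | inl a, inl i => - (val i == a)%:R
  | inl a, inr n => (Defs.tail G a == n)%:R - (Defs.head G a == n)%:R
  | inr i, inl j => - (j == i)%:R
  | inr i, inr n => 0
  end.
Definition beQ (r : DI) : R := if r is inl a then cost G a else 0.
Definition tOf (q : DV -> R) : tvec G := [ffun i => q (inl i)].
Definition yOf (q : DV -> R) : node G -> R := fun n => q (inr n).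
Definition qOf (t : tvec G) (y : node G -> R) : DV -> R :=
  fun v => match v with inl i => t i | inr n => y n end.
Definition Lfun (B : node G -> R) (W : tarc G -> R) : DV -> R :=
  fun v => match v with inl i => - W i | inr n => B n end.

Lemma qOfK q : qOf (tOf q) (yOf q) = q.
Proof. by apply: funext => -[i|n] //=; rewrite ffunE. Qed.

Lemma extendE (t : tvec G) a : extend t a = \sum_i (val i == a)%:R * t i.
Proof.
rewrite /extend; case: insubP => [a1 _ <-|Hn].
  by rewrite (eq_bigr (fun i => (i == a1)%:R * t i)) ?sum_delta // => i _;
     rewrite (inj_eq val_inj).
rewrite big1 // => i _; case: eqP => [e|]; last by rewrite mul0r.
by move: Hn; rewrite -e (valP i).
Qed.

Lemma sum_nodeD (k : node G) (F : node G -> R) :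
  \sum_n (k == n)%:R * F n = F k.
Proof. by rewrite -(sum_delta k F); apply: eq_bigr => n _; rewrite eq_sym. Qed.

Lemma dotQ_arc t y a : dotf (alQ (inl a)) (qOf t y) = incidT y a - extend t a.
Proof.
rewrite /dotf big_sumType /= extendE addrC; congr (_ + _).
  under eq_bigr do rewrite mulrBl.
  by rewrite sumrB !sum_nodeD.
by rewrite -sumrN; apply: eq_bigr => i _; rewrite mulNr.
Qed.

Lemma dotQ_t t y i : dotf (alQ (inr i)) (qOf t y) = - t i.
Proof.
rewrite /dotf big_sumType /= [X in _ + X]big1 ?addr0; last by move=> n _; rewrite mul0r.
by rewrite -(sum_delta i (fun j => - t j)); apply: eq_bigr => j _; rewrite mulNr mulrN.
Qed.

Lemma feasQ t y : (forall r, dotf (alQ r) (qOf t y) <= beQ r) <-> dual_feasible t y.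
Proof.
split.
  move=> H; split.
    by move=> a; have := H (inl a); rewrite dotQ_arc.
  by apply/forallP => i; have := H (inr i); rewrite dotQ_t /= oppr_le0.
move=> [H1 /forallP H2] [a|i] /=; first by rewrite dotQ_arc.
by rewrite dotQ_t oppr_le0.
Qed.

Lemma dotL B W t y : dotf (Lfun B W) (qOf t y) = dotV B y - \sum_i W i * t i.
Proof.
rewrite /dotf big_sumType /= addrC; congr (_ + _).
by rewrite -sumrN; apply: eq_bigr => i _; rewrite mulNr.
Qed.

Lemma incidE (x : Defs.arc G -> R) n :
  incid x n = \sum_a x a * ((Defs.tail G a == n)%:R - (Defs.head G a == n)%:R).
Proof.
rewrite /incid; under [RHS]eq_bigr do rewrite mulrBr.
rewrite sumrB; congr (_ - _); rewrite big_mkcond; apply: eq_bigr => a _;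
  by case: eqP; rewrite ?mulr1 ?mulr0.
Qed.

Lemma sum_incid (x : Defs.arc G -> R) (y : node G -> R) :
  \sum_n incid x n * y n = \sum_a x a * incidT y a.
Proof.
under eq_bigr do rewrite incidE mulr_suml.
rewrite exchange_big /=; apply: eq_bigr => a _.
rewrite /incidT -!sum_nodeD -sumrB mulr_sumr; apply: eq_bigr => n _.
by rewrite -mulrA mulrBl.
Qed.

Lemma sum_extend (x : Defs.arc G -> R) (t : tvec G) :
  \sum_a x a * extend t a = \sum_i t i * x (val i).
Proof.
under eq_bigr do rewrite extendE mulr_sumr.
rewrite exchange_big /=; apply: eq_bigr => i _.
rewrite -(sum_delta (val i) (fun a => t i * x a)); apply: eq_bigr => a _.
by rewrite [(a == _)]eq_sym mulrCA [t i * x a]mulrC.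
Qed.

Lemma cost_ge0 a : 0 <= cost G a.
Proof. by case: HG. Qed.

Lemma WD (x : Defs.arc G -> R) (B : node G -> R) (W : tarc G -> R) (t : tvec G) y :
  (forall n, incid x n = B n) -> (forall a, 0 <= x a) -> (forall i, x (val i) <= W i) ->
  dual_feasible t y -> dotV B y <= dotA (cost G) x + \sum_i t i * W i.
Proof.
move=> HB Hx HW [Hf /forallP Ht].
rewrite /dotV; under eq_bigr do rewrite -HB; rewrite sum_incid.
apply: (@le_trans _ _ (\sum_a x a * (cost G a + extend t a))).
  by apply: ler_sum => a _; apply: ler_wpM2l => //; have := Hf a; lra.
under eq_bigr do rewrite mulrDr; rewrite big_split /= sum_extend.
apply: lerD; first by apply: ler_sum => a _; rewrite mulrC.
by apply: ler_sum => i _; apply: ler_wpM2l.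
Qed.

Lemma interp (u : DI -> R) B W : (forall r, 0 <= u r) ->
  (forall v, \sum_r u r * alQ r v = Lfun B W v) ->
  [/\ forall n, incid (fun a => u (inl a)) n = B n,
      forall a, 0 <= u (inl a),
      forall i, u (inl (val i)) <= W i &
      \sum_r u r * beQ r = dotA (cost G) (fun a => u (inl a))].
Proof.
move=> Hu H; split.
- move=> n; have := H (inr n); rewrite big_sumType /= [X in _ + X]big1 ?addr0;
    last by move=> i _; rewrite mulr0.
  by move=> <-; rewrite incidE.
- by move=> a; apply: Hu.
- move=> i; have := H (inl i); rewrite big_sumType /=.
  have -> : \sum_a u (inl a) * - (val i == a)%:R = - u (inl (val i)).
    rewrite -(sum_delta (val i) (fun a => - u (inl a))); apply: eq_bigr => a _.
    by rewrite !mulrN eq_sym mulrC.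
  have -> : \sum_j u (inr j) * - (i == j)%:R = - u (inr i).
    rewrite -(sum_delta i (fun j => - u (inr j))); apply: eq_bigr => j _.
    by rewrite !mulrN eq_sym mulrC.
  have := Hu (inr i); lra.
- rewrite big_sumType /= [X in _ + X]big1 ?addr0; last by move=> i _; rewrite mulr0.
  by rewrite /dotA; apply: eq_bigr => a _; exact: mulrC.
Qed.

Lemma tf_flow (u : node G) : connect (@tollfree_arc R G) u (dest G) ->
  exists x : Defs.arc G -> R,
    [/\ forall n, incid x n = (n == u)%:R - (n == dest G)%:R,
        forall a, 0 <= x a & forall a, a \in tolled G -> x a = 0].
Proof.
move/connectP => [p Hp Hl]; elim: p u Hp Hl => [|v p IH] u /= Hp Hl.
  exists (fun _ => 0); split => // n; rewrite incidE big1 ?Hl ?subrr //.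
  by move=> a _; rewrite mul0r.
case/andP: Hp => Huv Hp; have [x [Hx1 Hx2 Hx3]] := IH v Hp Hl.
case/existsP: Huv => a /and3P [Ha /eqP Hta /eqP Hha].
exists (fun a' => x a' + (a' == a)%:R); split.
- move=> n; rewrite incidE; under eq_bigr do rewrite mulrDl.
  rewrite big_split /= -incidE Hx1 sum_delta Hta Hha.
  rewrite [u == n]eq_sym [v == n]eq_sym; lra.
- by move=> a'; apply: addr_ge0 => //; exact: ler0n.
- move=> a' Ha'; rewrite Hx3 // add0r; case: eqP => // e.
  by move: Ha; rewrite -e Ha'.
Qed.

Lemma feas0 : dual_feasible (0 : tvec G) (fun _ => 0).
Proof.
split; last by apply/forallP => i; rewrite ffunE.
move=> a; rewrite /incidT subrr extendE big1 ?subr0; first exact: cost_ge0.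
by move=> i _; rewrite ffunE mulr0.
Qed.

Lemma PFD (W : tarc G -> R) M :
  (forall t y, dual_feasible t y -> dotV (@bvec R G) y - \sum_i W i * t i <= M) ->
  exists x, [/\ forall n, incid x n = bvec n, forall a, 0 <= x a,
     forall i, x (val i) <= W i & dotA (cost G) x <= M].
Proof.
move=> H.
have Hf : feasible alQ beQ by exists (qOf 0 (fun _ => 0)); apply/feasQ; exact: feas0.
have [u [Hu0 [Hua Hub]]] := @farkas_implied R _ _ alQ beQ (Lfun (@bvec R G) W) M Hf
  (fun q Hq => ltac:(rewrite -(qOfK q) dotL; apply: H; apply/feasQ; by rewrite qOfK)).
have [Hx1 Hx2 Hx3 Hx4] := interp Hu0 Hua.
by exists (fun a => u (inl a)); split => //; rewrite -Hx4.
Qed.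


Lemma x0_exists : exists x0 : Defs.arc G -> R,
  [/\ forall n, incid x0 n = bvec n, forall a, 0 <= x0 a &
      forall a, a \in tolled G -> x0 a = 0].
Proof.
case: HG => _ _ _ hod hconn.
have [x [H1 H2 H3]] := tf_flow hconn; exists x; split => // n.
rewrite H1 /bvec; case: (eqVneq n (orig G)) => [->|hn].
  by rewrite (negbTE hod) /= ?mulr0n ?mulr1n; lra.
by case: (eqVneq n (dest G)) => _; rewrite /= ?mulr0n ?mulr1n; lra.
Qed.

Lemma dotT_sym (a b : tvec G) : dotT a b = dotT b a.
Proof. by apply: eq_bigr => i _; rewrite mulrC. Qed.

Lemma dual_opt (w : tvec G) : tnonneg w ->
  exists t y, dual_feasible t y /\
    forall t' y', dual_feasible t' y' -> dual_obj w t' y' <= dual_obj w t y.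
Proof.
move=> /forallP Hw.
have [x0 [Hx01 Hx02 Hx03]] := x0_exists.
have bound : forall t y, dual_feasible t y -> dual_obj w t y <= dotA (cost G) x0.
  move=> t y Hf.
  have := WD (W := w) Hx01 Hx02 (fun i => ltac:(rewrite Hx03 ?(valP i) //)) Hf.
  rewrite /dual_obj -/(dotT t w) dotT_sym; lra.
pose S := [set r | exists t y, dual_feasible t y /\ r = dual_obj w t y].
have S0 : S (dual_obj w 0 (fun _ => 0)) by exists 0, (fun _ => 0); split => //; exact: feas0.
have Sub : has_ubound S by exists (dotA (cost G) x0) => r [t [y [Hf ->]]]; exact: bound.
set m := sup S.
case: (pselect (exists t y, dual_feasible t y /\ m <= dual_obj w t y)).
  move=> [t [y [Hf Hm]]]; exists t, y; split => // t' y' Hf'.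
  apply: le_trans Hm; apply: ub_le_sup => //; by exists t', y'.
move=> Hno; exfalso.
pose al2 (r : option DI) (v : DV) := if r is Some r then alQ r v else - Lfun (@bvec R G) w v.
pose be2 (r : option DI) := if r is Some r then beQ r else - m.
have Hinf : ~ feasible al2 be2.
  move=> [q Hq]; apply: Hno; exists (tOf q), (yOf q); split.
    by apply/feasQ; rewrite qOfK => r; exact: (Hq (Some r)).
  have := Hq None; rewrite /= dotf_oppl -{1}(qOfK q) dotL /dual_obj /dotT; lra.
have [u [Hu0 [Hua Hub]]] := farkas_infeas Hinf.
set mu := u None.
have Hua' : forall v, \sum_r u (Some r) * alQ r v =
    Lfun (fun n => mu * bvec n) (fun i => mu * w i) v.
  move=> v; have := Hua v; rewrite big_opt /= -/mu.
  case: v => [i|n] /=; rewrite ?opprK => h; lra.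
have [Hx1 Hx2 Hx3 Hx4] := interp (fun r => Hu0 (Some r)) Hua'.
set x := fun a => u (Some (inl a)).
have Hcx : dotA (cost G) x < mu * m.
  by move: Hub; rewrite big_opt /= Hx4 -/mu; lra.
have Hwd : forall t y, dual_feasible t y -> mu * dual_obj w t y <= dotA (cost G) x.
  move=> t y Hf; have := WD Hx1 Hx2 Hx3 Hf.
  have -> : dotV (fun n => mu * bvec n) y = mu * dotV (@bvec R G) y.
    by rewrite /dotV mulr_sumr; apply: eq_bigr => n _; rewrite mulrA.
  have -> : \sum_i t i * (mu * w i) = mu * dotT w t.
    by rewrite /dotT mulr_sumr; apply: eq_bigr => i _; rewrite mulrCA [t i * _]mulrC.
  by rewrite /dual_obj mulrBr; lra.
have hmu := Hu0 None; rewrite -/mu in hmu.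
have [hpos|h0] := boolP (0 < mu).
  have : m <= dotA (cost G) x / mu.
    apply: ge_sup; first by exists (dual_obj w 0 (fun _ => 0)).
    move=> r [t [y [Hf ->]]]; rewrite ler_pdivlMr // mulrC; exact: Hwd.
  rewrite ler_pdivlMr // => h; have : mu * m = m * mu by rewrite mulrC.
  lra.
have e : mu = 0 by lra.
have := Hwd _ _ feas0; rewrite e mul0r; move: Hcx; rewrite e mul0r; lra.
Qed.

End Net.

Section Net2.
Variables (R : realType) (G : network R).
Hypothesis HG : standing_assumptions G.

Lemma restrA1E (x : Defs.arc G -> R) i : restrA1 x i = x (val i).
Proof. by rewrite ffunE. Qed.

Lemma feas_t0 (t : tvec G) : tnonneg t -> dual_feasible t (fun _ => 0).
Proof.
move=> Ht; split => // a; rewrite /incidT subrr extendE sub0r.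
have := cost_ge0 HG a; have : 0 <= \sum_i (val i == a)%:R * t i.
  by apply: sumr_ge0 => i _; apply: mulr_ge0; [exact: ler0n | exact: (forallP Ht)].
lra.
Qed.

Lemma fval_ge (t : tvec G) y : dual_feasible t y ->
  ((dotV (@bvec R G) y)%:E <= fval t)%E.
Proof.
move=> Hf; have Ht := Hf.2; rewrite /fval Ht.
apply: le_ereal_inf_tmp => _ [x [Hx1 Hx2] <-]; rewrite lee_fin.
have := WD (W := fun i => x (val i)) Hx1 Hx2 (fun i => lexx _) Hf.
suff -> : \sum_i t i * x (val i) = dotT t (restrA1 x) by [].
by apply: eq_bigr => i _; rewrite restrA1E.
Qed.

Lemma fval_le (t : tvec G) x : tnonneg t -> Xset x ->
  (fval t <= (dotA (cost G) x + dotT t (restrA1 x))%:E)%E.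
Proof. by move=> Ht Hx; rewrite /fval Ht; apply: ereal_inf_lbound; exists x. Qed.

Lemma gval_ge (w t : tvec G) y : dual_feasible t y ->
  ((dual_obj w t y)%:E <= gval w)%E.
Proof.
move=> Hf; apply: (@le_trans _ _ (fval t - (dotT t w)%:E)%E).
  by rewrite /dual_obj EFinB dotT_sym; apply: leeB => //; exact: fval_ge Hf.
by apply: ereal_sup_ubound; exists t.
Qed.

Lemma gval_le (w : tvec G) x : lower_feasible w x ->
  (gval w <= (dotA (cost G) x)%:E)%E.
Proof.
move=> [H1 H2 H3 H4]; apply: ge_ereal_sup => _ [t _ <-].
case Ht: (tnonneg t); last by rewrite /fval Ht addNye leNye.
apply: le_trans (leeB (fval_le Ht (conj H2 H4)) (lexx (dotT t w)%:E)) _.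
rewrite -EFinB lee_fin.
suff : dotT t (restrA1 x) <= dotT t w by lra.
apply: ler_sum => i _; rewrite restrA1E; apply: ler_wpM2l => //.
exact: (forallP Ht).
Qed.

Lemma gval_nonneg (w : tvec G) (z : R) : (gval w <= z%:E)%E -> tnonneg w.
Proof.
move=> Hz; apply: contraT => /forallPn [i]; rewrite -ltNge => hi.
pose lam := (`|z| + 1) / (- w i).
have lam0 : 0 <= lam by apply: divr_ge0; [have := normr_ge0 z; lra | lra].
pose t : tvec G := [ffun j => if j == i then lam else 0].
have Ht : tnonneg t by apply/forallP => j; rewrite ffunE; case: ifP.
have f0 : (0 <= fval t)%E.
  have := fval_ge (feas_t0 Ht); suff -> : dotV (@bvec R G) (fun _ => 0) = 0 by [].
  by rewrite /dotV big1 // => n _; rewrite mulr0.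
have dt : dotT t w = - (`|z| + 1).
  rewrite /dotT (bigD1 i) //= ffunE eqxx.
  rewrite big1 ?addr0; last by move=> j /negbTE hj; rewrite ffunE hj mul0r.
  by rewrite /lam -mulrA invrN mulNr mulVf ?mulrN1 // lt_eqF.
have : ((`|z| + 1)%:E <= gval w)%E.
  have Hel : (fval t - (dotT t w)%:E <= gval w)%E by apply: ereal_sup_ubound; exists t.
  apply: le_trans Hel.
  rewrite dt EFinN oppeK; apply: (@le_trans _ _ (0 + (`|z| + 1)%:E)%E).
    by rewrite add0e.
  by apply: leeD.
move/le_trans => /(_ _ Hz); rewrite lee_fin; have := ler_norm z; lra.
Qed.

Lemma solve (w : tvec G) : tnonneg w ->
  exists t0 y0 x0, [/\ dual_feasible t0 y0,
     forall t y, dual_feasible t y -> dual_obj w t y <= dual_obj w t0 y0,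
     lower_feasible w x0, dotA (cost G) x0 = dual_obj w t0 y0 &
     gval w = (dual_obj w t0 y0)%:E].
Proof.
move=> Hw; have [t0 [y0 [Hf Hopt]]] := dual_opt HG Hw.
have [x [Hx1 Hx2 Hx3 Hx4]] := PFD HG (W := w) (M := dual_obj w t0 y0)
   (fun t y Hf' => ltac:(have := Hopt t y Hf'; rewrite /dual_obj /dotT; exact)).
have Hl : lower_feasible w x by split.
have e : dotA (cost G) x = dual_obj w t0 y0.
  apply/eqP; rewrite eq_le Hx4 /=.
  have := WD Hx1 Hx2 Hx3 Hf; rewrite /dual_obj -/(dotT t0 w) dotT_sym; lra.
exists t0, y0, x; split => //.
apply/eqP; rewrite eq_le -e gval_le //= e; exact: gval_ge.
Qed.

End Net2.

Section LA.
Variables (R : realType) (G : network R).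

Definition ext (t : tvec G) (o : option (tarc G)) : R :=
  if o is Some i then t i else 1.

Lemma card_ext : #|{: option (tarc G)}| = (ntolls G).+1.
Proof. by rewrite card_option card_sig; congr _.+1; apply: eq_card => x; rewrite inE. Qed.

Lemma ext_dot (t : tvec G) (z : option (tarc G) -> R) :
  \sum_o ext t o * z o = z None + \sum_i t i * z (Some i).
Proof. by rewrite big_opt /= mul1r. Qed.

Lemma sumZ_ffun k (lam : 'I_k -> R) (p : 'I_k -> tvec G) a :
  (\sum_i lam i *: p i) a = \sum_i lam i * p i a.
Proof. by rewrite sum_ffunE; apply: eq_bigr => i _; rewrite ffunE. Qed.

Lemma aff_to_indep k (p : 'I_k -> tvec G) :
  aff_indep p -> indepf (fun i => ext (p i)).
Proof.
move=> H lam Hl; apply: H.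
  by rewrite -[RHS](Hl None); apply: eq_bigr => i _; rewrite /= mulr1.
apply/ffunP => a; rewrite sumZ_ffun ffunE -[RHS](Hl (Some a)).
by apply: eq_bigr.
Qed.

Lemma indep_to_aff k (p : 'I_k -> tvec G) :
  indepf (fun i => ext (p i)) -> aff_indep p.
Proof.
move=> H lam Hs Hz; apply: H => -[a|] /=.
  by have := congr1 (fun f : tvec G => f a) Hz; rewrite sumZ_ffun ffunE.
by rewrite -[RHS]Hs; apply: eq_bigr => i _; rewrite mulr1.
Qed.

Lemma aff_notB (p : 'I_(ntolls G).+2 -> tvec G) : ~ aff_indep p.
Proof.
move/aff_to_indep/indep_le; rewrite card_ext; by rewrite ltnn.
Qed.

Lemma aff_orth (p : 'I_(ntolls G).+1 -> tvec G) (v : tvec G) kap :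
  aff_indep p -> (forall i, dotT (p i) v = kap) -> v = 0.
Proof.
move=> Ha Hd; apply/eqP; apply: contraT => vn0.
pose z (o : option (tarc G)) : R := if o is Some a then v a else - kap.
pose F (i : 'I_(ntolls G).+2) : option (tarc G) -> R :=
  if unlift ord_max i is Some j then ext (p j) else z.
suff : indepf F by move/indep_le; rewrite card_ext ltnn.
move=> lam Hl.
have zpos : 0 < \sum_o z o * z o.
  have [a ha] : exists a, v a != 0.
    apply/existsP; apply: contraT; rewrite negb_exists => /forallP hv.
    by case/eqP: vn0; apply/ffunP => a; rewrite ffunE; apply/eqP/negPn/hv.
  rewrite big_opt /= (bigD1 a) //=.
  have h1 : 0 < v a * v a by rewrite lt0r mulf_neq0 //= -expr2 sqr_ge0.
  have h2 : 0 <= \sum_(i | i != a) v i * v i by apply: sumr_ge0 => i _; rewrite -expr2 sqr_ge0.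
  have h3 : 0 <= - kap * - kap by rewrite -expr2 sqr_ge0.
  lra.
have Fz : forall j, \sum_o F (lift ord_max j) o * z o = 0.
  move=> j; rewrite /F liftK ext_dot /= -(Hd j) /dotT; lra.
have Hsum : \sum_i lam i * (\sum_o F i o * z o) = 0.
  under eq_bigr do rewrite mulr_sumr.
  rewrite exchange_big /= big1 // => o _.
  transitivity (z o * (\sum_i lam i * F i o)); last by rewrite Hl mulr0.
  by rewrite mulr_sumr; apply: eq_bigr => i _; rewrite mulrA mulrC.
have lmax : lam ord_max = 0.
  move: Hsum; rewrite (bigD1_ord ord_max) //= [X in _ + X = _]big1; last by move=> j _; rewrite Fz mulr0.
  rewrite addr0 /F unlift_none => /eqP; rewrite mulf_eq0 => /orP [/eqP //|].
  by rewrite gt_eqF.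
have llift : forall j, lam (lift ord_max j) = 0.
  apply: (aff_to_indep Ha (lam := fun j => lam (lift ord_max j))) => o.
  have := Hl o; rewrite (bigD1_ord ord_max) //= lmax mul0r add0r => e; rewrite -[RHS]e.
  by apply: eq_bigr => j _; rewrite /F liftK.
by move=> i; case: (unliftP ord_max i) => [j ->|->].
Qed.

Lemma hyperplane (S : set (tvec G)) t0 : S t0 ->
  ~ (exists p : 'I_(ntolls G).+1 -> tvec G, (forall i, S (p i)) /\ aff_indep p) ->
  exists d kap, d != 0 /\ forall t, S t -> dotT t d = kap.
Proof.
move=> St0 HnA.
suff : forall k, (k <= (ntolls G).+1)%N ->
  (exists p : 'I_k -> tvec G, (forall i, S (p i)) /\ indepf (fun i => ext (p i))) \/
  (exists d kap, d != 0 /\ forall t, S t -> dotT t d = kap).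
  move/(_ _ (leqnn _)) => [[p [Sp Hp]]|//].
  by exfalso; apply: HnA; exists p; split => //; exact: indep_to_aff.
elim => [|k IH] hk.
  by left; exists (fun _ => 0); split => [[m hm]|lam Hl [m hm]].
have [[p [Sp Hp]]|//] := IH (ltnW hk); last by right.
have hk' : (k < #|{: option (tarc G)}|)%N by rewrite card_ext.
have [z [[j0 hj0] Hz]] := @orth_exists R k _ (fun i => ext (p i)) hk'.
case: (pselect (exists t, S t /\ \sum_o ext t o * z o != 0)) => [[t [St ht]]|hno].
  left; exists (fun i => if unlift ord_max i is Some j then p j else t); split.
    by move=> i; case: (unlift ord_max i).
  move=> lam Hl.
  have Hsum : \sum_i lam i * (\sum_o ext (if unlift ord_max i is Some j then p j else t) o * z o) = 0.
    under eq_bigr do rewrite mulr_sumr.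
    rewrite exchange_big /= big1 // => o _.
    transitivity ((\sum_i lam i * ext (if unlift ord_max i is Some j then p j else t) o) * z o);
      last by rewrite Hl mul0r.
    by rewrite mulr_suml; apply: eq_bigr => i _; rewrite mulrA.
  have lmax : lam ord_max = 0.
    move: Hsum; rewrite (bigD1_ord ord_max) //= [X in _ + X = _]big1; last first.
      by move=> j _; rewrite liftK Hz mulr0.
    rewrite addr0 unlift_none => /eqP; rewrite mulf_eq0 => /orP [/eqP //|].
    by rewrite (negbTE ht).
  have llift : forall j, lam (lift ord_max j) = 0.
    apply: (Hp (fun j => lam (lift ord_max j))) => o.
    have := Hl o; rewrite (bigD1_ord ord_max) //= lmax mul0r add0r => e; rewrite -[RHS]e.
    by apply: eq_bigr => j _; rewrite liftK.
  by move=> i; case: (unliftP ord_max i) => [j ->|->].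
right; exists [ffun a => z (Some a)], (- z None); split.
  apply/negP => /eqP d0.
  have : \sum_o ext t0 o * z o = 0.
    by apply/eqP; apply: contraT => h; exfalso; apply: hno; by exists t0.
  rewrite ext_dot big1 ?addr0 => [hN|i _]; last first.
    by have := congr1 (fun f : tvec G => f i) d0; rewrite !ffunE => ->; rewrite mulr0.
  move: hj0; case: j0 => [a|]; last by rewrite hN eqxx.
  by have := congr1 (fun f : tvec G => f a) d0; rewrite !ffunE => ->; rewrite eqxx.
move=> t St.
have : \sum_o ext t o * z o = 0 by apply/eqP; apply: contraT => h; exfalso; apply: hno; by exists t.
rewrite ext_dot /dotT => h.
have -> : \sum_i t i * [ffun a => z (Some a)] i = \sum_i t i * z (Some i).
  by apply: eq_bigr => i _; rewrite ffunE.
lra.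
Qed.

End LA.

Section Pert.
Variables (R : realType) (G : network R).
Hypothesis HG : standing_assumptions G.
Local Notation DV := (tarc G + node G)%type.
Local Notation DI := (Defs.arc G + tarc G)%type.

Lemma WDl (w' : tvec G) x t y : lower_feasible w' x -> dual_feasible t y ->
  dotV (@bvec R G) y <= dotA (cost G) x + dotT t w'.
Proof. by move=> [H1 H2 H3 H4] Hf; exact: WD H2 H4 H1 Hf. Qed.

Lemma pert (w d : tvec G) kap t0 y0 :
  dual_feasible t0 y0 ->
  (forall t y, dual_feasible t y -> dual_obj w t y <= dual_obj w t0 y0) ->
  (forall t, Tset w t -> dotT t d = kap) ->
  forall sg : R, exists mu, 0 <= mu /\ exists xt : Defs.arc G -> R,
   [/\ forall n, incid xt n = mu * bvec n, forall a, 0 <= xt a,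
       forall i, xt (val i) <= mu * w i + sg * d i &
       dotA (cost G) xt <= mu * dual_obj w t0 y0 - sg * kap].
Proof.
move=> Hf0 Hopt HT sg.
set h := dual_obj w t0 y0.
pose al2 (r : option DI) (v : DV) := if r is Some r then alQ r v else - Lfun (@bvec R G) w v.
pose be2 (r : option DI) := if r is Some r then beQ r else - h.
have Hfe : feasible al2 be2.
  exists (qOf t0 y0) => -[r|] /=; first by move: r; apply/feasQ.
  by rewrite dotf_oppl dotL /h /dual_obj /dotT.
have Himp : forall q, (forall i, dotf (al2 i) q <= be2 i) ->
    dotf (Lfun (fun _ => 0) (fun i => sg * d i)) q <= - sg * kap.
  move=> q Hq.
  have Hq' : dual_feasible (tOf q) (yOf q).
    by apply/feasQ; rewrite qOfK => r; exact: (Hq (Some r)).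
  have HTq : Tset w (tOf q).
    exists (yOf q); split => // t' y' Hf'; apply: le_trans (Hopt _ _ Hf') _.
    have := Hq None; rewrite /= dotf_oppl -{1}(qOfK q) dotL /h /dual_obj /dotT; lra.
  rewrite -(qOfK q) dotL.
  have := HT _ HTq; rewrite /dotT => e.
  have -> : dotV (fun _ => 0) (yOf q) = 0.
    by rewrite /dotV big1 // => n _; rewrite mul0r.
  have -> : \sum_i sg * d i * tOf q i = sg * kap.
    by rewrite -e mulr_sumr; apply: eq_bigr => i _; rewrite -mulrA [d i * _]mulrC.
  lra.
have [u [Hu0 [Hua Hub]]] := @farkas_implied R _ _ al2 be2
   (Lfun (fun _ => 0) (fun i => sg * d i)) (- sg * kap) Hfe Himp.
set mu := u None.
have Hua' : forall v, \sum_r u (Some r) * alQ r v =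
    Lfun (fun n => mu * bvec n) (fun i => mu * w i + sg * d i) v.
  move=> v; have := Hua v; rewrite big_opt /= -/mu.
  case: v => [i|n] /=; rewrite ?opprK => hh; lra.
have [Hx1 Hx2 Hx3 Hx4] := interp (fun r => Hu0 (Some r)) Hua'.
exists mu; split; first exact: Hu0.
exists (fun a => u (Some (inl a))); split => //.
by move: Hub; rewrite big_opt /= Hx4 -/mu; lra.
Qed.

Lemma incid_lin (x y : Defs.arc G -> R) A B n :
  incid (fun a => A * x a + B * y a) n = A * incid x n + B * incid y n.
Proof.
rewrite !incidE !mulr_sumr -big_split; apply: eq_bigr => a _ /=.
by rewrite mulrDl !mulrA.
Qed.

Lemma comb (w d : tvec G) h kap (sg mu M : R) xt x0 :
  0 <= mu -> mu + 1 <= M ->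
  (forall n, incid xt n = mu * bvec n) -> (forall a, 0 <= xt a) ->
  (forall i, xt (val i) <= mu * w i + sg * d i) ->
  dotA (cost G) xt <= mu * h - sg * kap ->
  lower_feasible w x0 -> dotA (cost G) x0 = h ->
  exists x, lower_feasible [ffun i => w i + sg / M * d i] x /\
            dotA (cost G) x <= h - sg / M * kap.
Proof.
move=> hmu hM H1 H2 H3 H4 [L1 L2 L3 L4] Hc0.
have M0 : 0 < M by lra.
pose x a := M^-1 * xt a + (M^-1 * (M - mu)) * x0 a.
have Mi0 : 0 <= M^-1 by rewrite invr_ge0 ltW.
have Mm0 : 0 <= M^-1 * (M - mu) by apply: mulr_ge0 => //; lra.
have xi : forall a, 0 <= x a.
  by move=> a; apply: addr_ge0; apply: mulr_ge0.
exists x; split; last first.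
  have -> : dotA (cost G) x = M^-1 * dotA (cost G) xt + (M^-1 * (M - mu)) * dotA (cost G) x0.
    rewrite /dotA !mulr_sumr -big_split; apply: eq_bigr => a _ /=.
    by rewrite /x; ring.
  rewrite Hc0.
  have : M^-1 * dotA (cost G) xt <= M^-1 * (mu * h - sg * kap).
    by rewrite ler_pM2l ?invr_gt0.
  have -> : h - sg / M * kap = M^-1 * (mu * h - sg * kap) + M^-1 * (M - mu) * h.
    by field; rewrite gt_eqF.
  lra.
have Mi : M^-1 * M = 1 by rewrite mulVf // gt_eqF.
split.
- move=> i; rewrite ffunE /x.
  have h1 : M^-1 * xt (val i) <= M^-1 * (mu * w i + sg * d i) by rewrite ler_pM2l ?invr_gt0.
  have h2 : M^-1 * (M - mu) * x0 (val i) <= M^-1 * (M - mu) * w i.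
    by apply: ler_wpM2l.
  have -> : w i + sg / M * d i = M^-1 * (mu * w i + sg * d i) + M^-1 * (M - mu) * w i.
    by field; rewrite gt_eqF.
  lra.
- move=> n; rewrite incid_lin H1 L2.
  by field; rewrite gt_eqF.
- apply/forallP => i; rewrite ffunE.
  have := L1 i; have := xi (val i); rewrite /x.
  have -> : w i + sg / M * d i = M^-1 * (mu * w i + sg * d i) + M^-1 * (M - mu) * w i.
    by field; rewrite gt_eqF.
  move=> hx hx0.
  have h1 : M^-1 * xt (val i) <= M^-1 * (mu * w i + sg * d i) by rewrite ler_pM2l ?invr_gt0.
  have h2 : M^-1 * (M - mu) * x0 (val i) <= M^-1 * (M - mu) * w i.
    by apply: ler_wpM2l.
  lra.
- exact: xi.
Qed.

End Pert.

Lemma dotT_ffun (R : realType) (G : network R) (t a b : tvec G) (c : R) :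
  dotT t [ffun i => a i + c * b i] = dotT t a + c * dotT t b.
Proof.
rewrite /dotT mulr_sumr -big_split; apply: eq_bigr => i _ /=.
by rewrite ffunE mulrDr mulrCA.
Qed.

Lemma dotT_sub (R : realType) (G : network R) (t a b : tvec G) :
  dotT t (a - b) = dotT t a - dotT t b.
Proof.
rewrite /dotT -sumrB; apply: eq_bigr => i _ /=.
by rewrite !ffunE mulrBr.
Qed.

Unset Implicit Arguments.

Theorem lemma4 (R : realType) (G : network R) (HG : standing_assumptions G)
    (w : tvec G) (w_ge0 : tnonneg w) :
  [<-> strongly_bilevel_feasible w;
       reaction_set [set w];
       WsetT (Tset w) = [set w];
       (exists z : R, gval w = z%:E /\ extreme_point (@epi_g R G) (w, (z : R^o)));
       aff_dim_eq (Tset w) (ntolls G)].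
Proof.
have [t0 [y0 [x0 [Hf0 Hopt Hl0 Hc0 Hg0]]]] := solve HG w_ge0.
set h := dual_obj w t0 y0 in Hopt Hc0 Hg0.
have TsetE : forall t, Tset w t -> exists y, dual_feasible t y /\ dual_obj w t y = h.
  move=> t [y [Hf Hmax]]; exists y; split => //.
  by apply/eqP; rewrite eq_le Hopt //= Hmax.
have Tt0 : Tset w t0 by exists y0; split.
have epi_ge : forall (w' : tvec G) (z : R) t y, epi_g (w', (z : R^o)) ->
    dual_feasible t y -> dual_obj w' t y <= z.
  by move=> w' z t y H Hf; have := le_trans (gval_ge w' Hf) H; rewrite lee_fin.
have tconst : aff_dim_eq (Tset w) (ntolls G) -> forall v,
    (forall t1 t2, Tset w t1 -> Tset w t2 -> dotT t1 v = dotT t2 v) -> v = 0.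
  move=> [[p [Sp Hp]] _] v Hv.
  by apply: (aff_orth (kap := dotT (p ord0) v) Hp) => i; apply: Hv.
have notE : ~ aff_dim_eq (Tset w) (ntolls G) -> exists (d : tvec G) kap (M : R),
    [/\ d != 0, 0 < M, forall t, Tset w t -> dotT t d = kap,
     exists x, lower_feasible [ffun i => w i + 1 / M * d i] x /\
               dotA (cost G) x <= h - 1 / M * kap &
     exists x, lower_feasible [ffun i => w i + -1 / M * d i] x /\
               dotA (cost G) x <= h - -1 / M * kap].
  move=> nE.
  have nA : ~ (exists p : 'I_(ntolls G).+1 -> tvec G,
                 (forall i, Tset w (p i)) /\ aff_indep p).
    by move=> HA; apply: nE; split => // -[p [_ Hp]]; exact: (@aff_notB R G p Hp).
  have [d [kap [dn0 Hd]]] := hyperplane Tt0 nA.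
  have [mu1 [hmu1 [xt1 [A1 A2 A3 A4]]]] := pert Hf0 Hopt Hd 1.
  have [mu2 [hmu2 [xt2 [B1 B2 B3 B4]]]] := pert Hf0 Hopt Hd (-1).
  have hM1 : mu1 + 1 <= mu1 + mu2 + 1 by lra.
  have hM2 : mu2 + 1 <= mu1 + mu2 + 1 by lra.
  have [xp [Hxp Hcp]] := comb hmu1 hM1 A1 A2 A3 A4 Hl0 Hc0.
  have [xm [Hxm Hcm]] := comb hmu2 hM2 B1 B2 B3 B4 Hl0 Hc0.
  exists d, kap, (mu1 + mu2 + 1); split => //; last by exists xm.
    by lra.
  by exists xp.
have dn0E : forall (d : tvec G) (c : R), c != 0 -> [ffun i => w i + c * d i] = w -> d = 0.
  move=> d c hc e; apply/ffunP => i; have := congr1 (fun f : tvec G => f i) e.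
  rewrite !ffunE => e'; have : c * d i = 0 by lra.
  by move/eqP; rewrite mulf_eq0 (negbTE hc) /= => /eqP ->.
have BD : reaction_set [set w] ->
    exists z : R, gval w = z%:E /\ extreme_point (@epi_g R G) (w, (z : R^o)).
  move=> [F [[FC Fconv Fface] Fnv FW]].
  have Fw : forall w1 z1, F (w1, z1) -> w1 = w.
    move=> w1 z1 H; have : [set w' | exists z, F (w', z)] w1 by exists z1.
    by rewrite -FW.
  have [z Fz] : exists z, F (w, z).
    by have : [set w' | exists z, F (w', z)] w by rewrite -FW.
  have nv : forall z1 z2, F (w, z1) -> F (w, z2) -> z1 = z2.
    move=> z1 z2 H1 H2; apply/eqP; apply: contraT => hne; exfalso; apply: Fnv.
    exists 1%N, (fun _ => (w, z1)), (fun _ => (w, z2)), (fun _ => (z1 - z2)^-1).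
    split => //; rewrite big_ord1.
    have -> : (z1 - z2)^-1 *: ((w, z1) - (w, z2)) =
              ((z1 - z2)^-1 *: (w - w), ((z1 - z2)^-1 * (z1 - z2) : R^o)) by [].
    by rewrite subrr scaler0 mulVf // subr_eq0.
  have Cz := FC _ Fz.
  have hz : h <= z by move: Cz; rewrite /epi_g /= Hg0 lee_fin.
  have Ch : epi_g (w, (h : R^o)) by rewrite /epi_g /= Hg0.
  have C2 : epi_g (w, (2 * z - h : R^o)) by rewrite /epi_g /= Hg0 lee_fin; lra.
  have e : (1 / 2 : R) *: (w, (h : R^o)) + (1 - 1 / 2) *: (w, (2 * z - h : R^o)) = (w, z).
    have -> : (1 / 2 : R) *: (w, (h : R^o)) + (1 - 1 / 2) *: (w, (2 * z - h : R^o)) =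
      ((1 / 2 : R) *: w + (1 - 1 / 2) *: w, (1 / 2 * h + (1 - 1 / 2) * (2 * z - h) : R^o)) by [].
    congr (_, _); first by rewrite -scalerDl addrC subrK scale1r.
    by field.
  have [Fh _] := Fface _ _ Ch C2 (1 / 2) ltac:(lra) ltac:(by rewrite e).
  have zh : z = h by apply: nv.
  exists z; split; first by rewrite Hg0 zh.
  split => // -[wx zx] y Cx Cy l hl E.
  have [Fx Fy] := Fface _ _ Cx Cy l hl ltac:(by rewrite -E).
  move: y Fy Cy E => [wy zy] Fy Cy E.
  have ex := Fw _ _ Fx; have ey := Fw _ _ Fy; subst wx wy.
  by rewrite (nv _ _ Fx Fz) (nv _ _ Fy Fz).
have DB : (exists z : R, gval w = z%:E /\ extreme_point (@epi_g R G) (w, (z : R^o))) ->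
    reaction_set [set w].
  move=> [z [Hz [Cp Hext]]]; exists [set (w, (z : R^o))]; split.
  - split.
    + by move=> p ->.
    + move=> x y -> -> l _ /=.
      by rewrite -scalerDl addrC subrK scale1r.
    + move=> x y Cx Cy l hl E.
      by have [-> ->] := Hext x y Cx Cy l hl (esym E).
  - move=> [k [p [q [mu [Hpq E]]]]].
    rewrite big1 in E; last by move=> i _; case: (Hpq i) => -> ->; rewrite subrr scaler0.
    by have := congr1 snd E => /= /eqP; rewrite oner_eq0.
  - apply/seteqP; split => w'.
      by move=> ->; exists z.
    by move=> [z' e]; exact: (congr1 fst e).
have EC : aff_dim_eq (Tset w) (ntolls G) -> WsetT (Tset w) = [set w].
  move=> HE; apply/seteqP; split => w'; last first.
    move=> -> t Ht; have [y [Hf Ho]] := TsetE t Ht.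
    exists x0; split => // w'' x'' Hl''; rewrite /lower_obj.
    have := WDl Hl'' Hf; move: Ho; rewrite /dual_obj dotT_sym Hc0; lra.
  move=> Hw'.
  have phi : forall t y, Tset w t -> dual_feasible t y -> dual_obj w t y = h ->
      exists x, lower_feasible w' x /\ dotA (cost G) x = dotV (@bvec R G) y - dotT t w'.
    move=> t y Ht Hf Ho; have [x [Hl Hmin]] := Hw' t Ht; exists x; split => //.
    have := Hmin w x0 Hl0; rewrite /lower_obj; have := WDl Hl Hf.
    move: Ho; rewrite /dual_obj dotT_sym Hc0; lra.
  have key : forall t1 t2, Tset w t1 -> Tset w t2 -> dotT t1 (w' - w) = dotT t2 (w' - w).
    move=> t1 t2 H1 H2.
    have [y1 [Hf1 Ho1]] := TsetE t1 H1; have [y2 [Hf2 Ho2]] := TsetE t2 H2.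
    have [x1 [Hl1 Hc1]] := phi t1 y1 H1 Hf1 Ho1.
    have [x2 [Hl2 Hc2]] := phi t2 y2 H2 Hf2 Ho2.
    have := WDl Hl1 Hf2; have := WDl Hl2 Hf1.
    move: Ho1 Ho2; rewrite !dotT_sub /dual_obj !(dotT_sym w); lra.
  by have := tconst HE _ key => /eqP; rewrite subr_eq0 => /eqP.
have ED : aff_dim_eq (Tset w) (ntolls G) ->
    exists z : R, gval w = z%:E /\ extreme_point (@epi_g R G) (w, (z : R^o)).
  move=> HE; exists h; split => //; split; first by rewrite /epi_g /= Hg0.
  move=> [w1 z1] [w2 z2] H1 H2 l hl E.
  have Ew : w = l *: w1 + (1 - l) *: w2 by have := congr1 fst E.
  have Ez : h = l * z1 + (1 - l) * z2 by have := congr1 snd E.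
  have hl0 : 0 < l by case/andP: hl.
  have hl1 : 0 < 1 - l by case/andP: hl => _; rewrite subr_gt0.
  have side : forall t y, dual_feasible t y -> dual_obj w t y = h ->
      dual_obj w1 t y = z1 /\ dual_obj w2 t y = z2.
    move=> t y Hf Ho; have a1 := epi_ge _ _ _ _ H1 Hf; have a2 := epi_ge _ _ _ _ H2 Hf.
    have ew : dotT w t = l * dotT w1 t + (1 - l) * dotT w2 t.
      rewrite Ew /dotT !mulr_sumr -big_split; apply: eq_bigr => i _ /=.
      by rewrite !ffunE mulrDl !mulrA.
    have p1 : 0 <= l * (z1 - dual_obj w1 t y) by apply: mulr_ge0; lra.
    have p2 : 0 <= (1 - l) * (z2 - dual_obj w2 t y) by apply: mulr_ge0; lra.
    have s0 : l * (z1 - dual_obj w1 t y) + (1 - l) * (z2 - dual_obj w2 t y) = 0.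
      move: Ho; rewrite Ez /dual_obj ew => Ho; rewrite !mulrBr; lra.
    have q1 : l * (z1 - dual_obj w1 t y) = 0 by lra.
    have q2 : (1 - l) * (z2 - dual_obj w2 t y) = 0 by lra.
    move: q1 q2 => /eqP; rewrite mulf_eq0 gt_eqF //= subr_eq0 => /eqP <-.
    by move/eqP; rewrite mulf_eq0 gt_eqF //= subr_eq0 => /eqP <-.
  have weq : forall (w1 : tvec G) (z1 : R),
      (forall t y, dual_feasible t y -> dual_obj w t y = h -> dual_obj w1 t y = z1) ->
      w1 = w /\ z1 = h.
    move=> v1 u1 Hs.
    have key : forall t1 t2, Tset w t1 -> Tset w t2 -> dotT t1 (v1 - w) = dotT t2 (v1 - w).
      move=> t1 t2 T1 T2.
      have [y1 [Hf1 Ho1]] := TsetE t1 T1; have [y2 [Hf2 Ho2]] := TsetE t2 T2.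
      have := Hs _ _ Hf1 Ho1; have := Hs _ _ Hf2 Ho2.
      move: Ho1 Ho2; rewrite !dotT_sub /dual_obj !(dotT_sym _ t1) !(dotT_sym _ t2); lra.
    have ev : v1 = w by have := tconst HE _ key => /eqP; rewrite subr_eq0 => /eqP.
    by split => //; rewrite -(Hs _ _ Hf0 erefl) ev.
  have [e1 f1] := weq w1 z1 (fun t y Hf Ho => (side t y Hf Ho).1).
  have [e2 f2] := weq w2 z2 (fun t y Hf Ho => (side t y Hf Ho).2).
  by rewrite e1 f1 e2 f2.
have CE : WsetT (Tset w) = [set w] -> aff_dim_eq (Tset w) (ntolls G).
  move=> HC; case: (pselect (aff_dim_eq (Tset w) (ntolls G))) => // nE; exfalso.
  have [d [kap [M [dn0 M0 Hd [xp [Hxp Hcp]] _]]]] := notE nE.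
  pose wp : tvec G := [ffun i => w i + 1 / M * d i].
  have : WsetT (Tset w) wp.
    move=> t Ht; have [y [Hf Ho]] := TsetE t Ht.
    exists xp; split => // w'' x'' Hl''; rewrite /lower_obj.
    have := WDl Hl'' Hf; rewrite /wp dotT_ffun (Hd t Ht).
    move: Ho; rewrite /dual_obj dotT_sym; lra.
  rewrite HC => /= e; case/eqP: dn0; apply: (dn0E d (1 / M)) => //.
  by rewrite mul1r invr_eq0 gt_eqF.
have DE : (exists z : R, gval w = z%:E /\ extreme_point (@epi_g R G) (w, (z : R^o))) ->
    aff_dim_eq (Tset w) (ntolls G).
  move=> [z [Hz [Cp Hext]]].
  have zh : z = h by move: Hz; rewrite Hg0 => -[].
  case: (pselect (aff_dim_eq (Tset w) (ntolls G))) => // nE; exfalso.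
  have [d [kap [M [dn0 M0 Hd [xp [Hxp Hcp]] [xm [Hxm Hcm]]]]]] := notE nE.
  pose wp : tvec G := [ffun i => w i + 1 / M * d i].
  pose wm : tvec G := [ffun i => w i + -1 / M * d i].
  have C1 : epi_g (wp, (h - 1 / M * kap : R^o)).
    by rewrite /epi_g /=; apply: le_trans (gval_le Hxp) _; rewrite lee_fin.
  have C2 : epi_g (wm, (h - -1 / M * kap : R^o)).
    by rewrite /epi_g /=; apply: le_trans (gval_le Hxm) _; rewrite lee_fin.
  have e : (w, (z : R^o)) = (1 / 2 : R) *: (wp, (h - 1 / M * kap : R^o)) +
                  (1 - 1 / 2) *: (wm, (h - -1 / M * kap : R^o)).
    have -> : (1 / 2 : R) *: (wp, (h - 1 / M * kap : R^o)) +
                  (1 - 1 / 2) *: (wm, (h - -1 / M * kap : R^o)) =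
      ((1 / 2 : R) *: wp + (1 - 1 / 2) *: wm,
       (1 / 2 * (h - 1 / M * kap) + (1 - 1 / 2) * (h - -1 / M * kap) : R^o)) by [].
    congr (_, _).
      apply/ffunP => i; rewrite !ffunE.
      rewrite -[(1/2) *: _]/(1/2 * _) -[(1 - 1/2) *: _]/((1 - 1/2) * _).
      by field; rewrite gt_eqF.
    by rewrite zh; field; rewrite gt_eqF.
  have [e1 _] := Hext _ _ C1 C2 (1 / 2) ltac:(lra) e.
  have := congr1 fst e1; rewrite /= => e2.
  case/eqP: dn0; apply: (dn0E d (1 / M)); last by rewrite /wp in e2.
  by rewrite mul1r invr_eq0 gt_eqF.
tfae.
- by move=> [_ H].
- by move=> /BD /DE /EC.
- by move=> /CE /ED.
- exact: DE.
- by move=> /ED /DB H; split.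
Qed.
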